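(* Let $n\ge1$, $z\in\{1,\dots,n+1\}$, and let $v_{n,z}=(a_1,\dots,a_n)$ with $a_i=z+1-i$ for $i<z$ and $a_i=1$ for $i\ge z$. Then the vector $(T_1(v_{n,z}),\dots,T_n(v_{n,z}))$ defines a Dyck path of length $2(n+1)$.
   Context: A Dyck path of length $2N$ is a word $w$ in the letters $U,D$ with $N$ letters $U$ and $N$ letters $D$ such that every prefix of $w$ contains at least as many $U$'s as $D$'s; $\mathfrak{D}_{2N}$ denotes the set of them. For $G\in\mathfrak{D}_{2(n+1)}$ let $m_i$ be the number of $U$'s preceding the $i$-th $D$ in $G$, and set $v_G=(v_1,\dots,v_n)$ with $v_i=m_i-i+1$. A vector $w\in\mathbb{Z}^n$ defines a Dyck path of length $2(n+1)$ if $w=v_G$ for some $G\in\mathfrak{D}_{2(n+1)}$. For $u=(u_1,\dots,u_m)\in\mathbb{N}^m$ and $1\le i\le m$, $T_i(u)$ is defined as follows: put $r_0=u_i$; as long as there is an index $l\in\{1,\dots,i\}$ with $r_k-u_l>0$, let $l_k$ be the largest such index and set $r_{k+1}=r_k-u_{l_k}$; if the process stops at $r_t$ (with $t\ge0$ steps), then $T_i(u)=r_t+t$. (In particular $T_i(u)=u_i$ if $u_i-u_l\le0$ for all $l\le i$.) For example, for $u=(14,52,4,23,9,2)$ one gets $(T_1(u),\dots,T_6(u))=(14,13,4,8,3,2)$. *)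

(* Defs.v *)
From mathcomp Require Import all_boot all_order all_algebra.
Set Implicit Arguments. Unset Strict Implicit. Unset Printing Implicit Defensive.
Import GRing.Theory Num.Theory.

(* Words in U,D are encoded as seq bool: true = U, false = D. *)

Definition is_dyck (N : nat) (w : seq bool) : Prop :=
  size w = N.*2 /\ count id w = N /\
  forall k, count negb (take k w) <= count id (take k w).

Fixpoint ups_before_D (s : seq bool) (c : nat) : seq nat :=
  match s with
  | [::] => [::]
  | true :: s' => ups_before_D s' c.+1
  | false :: s' => c :: ups_before_D s' c
  end.

Definition mD (G : seq bool) (i : nat) : nat := nth 0 (ups_before_D G 0) i.-1.

Definition vG (n : nat) (G : seq bool) : seq int :=
  [seq ((mD G i)%:Z - i%:Z + 1)%R | i <- iota 1 n].

Definition defines_dyck (n : nat) (w : seq int) : Prop :=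
  exists G, is_dyck n.+1 G /\ vG n G = w.

Definition ucoord (u : seq nat) (l : nat) : nat := nth 0 u l.-1.

Definition Tstep (u : seq nat) (i r : nat) : option nat :=
  let ls := [seq l <- iota 1 i | ucoord u l < r] in
  if ls is [::] then None else Some (r - ucoord u (last 0 ls)).

Fixpoint Tloop (u : seq nat) (i fuel r t : nat) : nat :=
  match fuel with
  | 0 => r + t
  | f.+1 => match Tstep u i r with
            | None => r + t
            | Some r' => Tloop u i f r' t.+1
            end
  end.

(* Fuel u_i + 1: whenever the process terminates with u_i > 0 all
   u_1..u_i are positive, so every step decreases r and at most u_i steps
   occur; hence this agrees with the paper's T_i wherever it is defined. *)
Definition T (u : seq nat) (i : nat) : nat :=
  Tloop u i (ucoord u i).+1 (ucoord u i) 0.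

Definition vnz (n z : nat) : seq nat :=
  [seq (if i < z then z + 1 - i else 1) | i <- iota 1 n].

Example T_example :
  [seq T [:: 14; 52; 4; 23; 9; 2] i | i <- iota 1 6] = [:: 14; 13; 4; 8; 3; 2].
Proof. by []. Qed.

Example vG_example :
  vG 2 [:: true; true; false; true; false; false] = [:: Posz 2; Posz 2].
Proof. by []. Qed.

(* Main.v *)
Require Import Defs.
From mathcomp Require Import all_boot all_order all_algebra.
From mathcomp Require Import zify.

Definition Pref (w : seq bool) : Prop :=
  forall k, count negb (take k w) <= count id (take k w).

Lemma Pref_cat s1 s2 : Pref s1 -> Pref s2 -> Pref (s1 ++ s2).
Proof.
move=> h1 h2 k; rewrite take_cat; case: ltnP => _; first exact: h1.
rewrite !count_cat; have := h1 (size s1); rewrite take_size.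
have := h2 (k - size s1); lia.
Qed.

Lemma Pref_UD : Pref [:: true; false].
Proof. by case=> [|[|k]]. Qed.

Lemma Pref_flat m : Pref (flatten (nseq m [:: true; false])).
Proof.
elim: m => [|m IH]; first by case.
by move: (@Pref_cat _ _ Pref_UD IH).
Qed.

Lemma take_nseqm (k z : nat) (x : bool) : take k (nseq z x) = nseq (minn k z) x.
Proof.
case: (leqP k z) => h.
  by rewrite take_nseq // (minn_idPl h).
by rewrite take_oversize ?size_nseq ?(minn_idPr (ltnW h)) // ltnW.
Qed.

Lemma Pref_block z : Pref (nseq z true ++ nseq z false).
Proof.
move=> k; rewrite take_cat size_nseq; case: ltnP => _.
  by rewrite take_nseqm !count_nseq /=; lia.
by rewrite take_nseqm !count_cat !count_nseq /=; lia.
Qed.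

Lemma ups_U k s c : ups_before_D (nseq k true ++ s) c = ups_before_D s (c + k).
Proof. by elim: k c => [|k IH] c /=; rewrite ?addn0 // IH addnS. Qed.

Lemma ups_D k s c : ups_before_D (nseq k false ++ s) c = nseq k c ++ ups_before_D s c.
Proof. by elim: k => [|k IH] //=; rewrite IH. Qed.

Lemma ups_flat m c : ups_before_D (flatten (nseq m [:: true; false])) c = iota c.+1 m.
Proof. by elim: m c => [|m IH] c //=; rewrite IH. Qed.

Lemma vnz_coord n z l : 1 <= l <= n ->
  ucoord (vnz n z) l = if l < z then z + 1 - l else 1.
Proof.
move=> /andP[h1 h2]; rewrite /ucoord /vnz (nth_map 0); last by rewrite size_iota; lia.
rewrite nth_iota; last lia.
by have -> : 1 + l.-1 = l by lia.
Qed.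

Lemma T_vnz n z i : 1 <= i <= n -> T (vnz n z) i = if i < z then z + 1 - i else 1.
Proof.
move=> hi; rewrite /T /=.
have -> : Tstep (vnz n z) i (ucoord (vnz n z) i) = None.
  rewrite /Tstep.
  have -> : [seq l <- iota 1 i | ucoord (vnz n z) l < ucoord (vnz n z) i] = [::] => //.
  apply/eqP; rewrite -[_ == _]negbK -has_filter; apply/hasPn => l.
  rewrite mem_iota => hl.
  rewrite vnz_coord ?vnz_coord; try lia.
  case: (ltnP l z); case: (ltnP i z); lia.
by rewrite addn0 vnz_coord.
Qed.

Theorem proposition13 (n z : nat) :
  1 <= n -> 1 <= z <= n.+1 ->
  defines_dyck n [seq Posz (T (vnz n z) i) | i <- iota 1 n].
Proof.
move=> hn /andP[hz1 hz2].
exists (nseq z true ++ nseq z false ++ flatten (nseq (n.+1 - z) [:: true; false])).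
split.
  split.
    rewrite !size_cat !size_nseq.
    have -> : forall m, size (flatten (nseq m [:: true; false])) = m.*2.
      by elim=> [|m IH] //=; rewrite IH doubleS.
    lia.
  split.
    rewrite !count_cat !count_nseq /=.
    have -> : forall m, count id (flatten (nseq m [:: true; false])) = m.
      by elim=> [|m IH] //=; rewrite IH.
    lia.
  rewrite catA; apply: Pref_cat; [exact: Pref_block | exact: Pref_flat].
rewrite /vG; apply/eq_in_map => i; rewrite mem_iota => hi.
rewrite T_vnz; last lia.
rewrite /mD ups_U add0n ups_D ups_flat nth_cat size_nseq.
case: ltnP => h1.
  rewrite nth_nseq h1.
  case: ltnP => h2.
    have -> : z + 1 - i = (z - i) + 1 by lia.
    by rewrite PoszD -[Posz (z - i)]subzn; lia.
  have -> : i = z by lia.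
  by rewrite GRing.subrr GRing.add0r.
rewrite nth_iota; last lia.
have -> : z.+1 + (i.-1 - z) = i by lia.
rewrite ifF; last lia.
by rewrite GRing.subrr GRing.add0r.
Qed.
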